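(* Let $Q:(-\infty,-1)\to(-\infty,0)$ be the inverse of the strictly increasing function $G\mapsto G-e^G$ on $(-\infty,0)$, and define $R:\mathbb{R}\to\mathbb{R}$ by $R(V)=-2(1-e^{Q(V)})^2$ for $V<-1$ and $R(V)=4(V+1)$ for $V\ge -1$. Fix $m<-1$. For $n\in\mathbb{R}$ let $V(t;n)$ denote the unique solution of the initial value problem $$V''+3V'=R(V),\ t>0,\qquad V(0)=m,\quad V'(0)=n,$$ (prime denoting $d/dt$, and $V_t=dV/dt$), defined on its interval of existence. Define $\beta^-=\{n\in\mathbb{R}: \text{there exists } t>0 \text{ with } V_t(t;n)<0\}$, $\beta^0=\{n\in\mathbb{R}: V_t(t;n)>0 \text{ and } V(t;n)\le -1 \text{ for all } t>0\}$, $\beta^+=\{n\in\mathbb{R}: V_t(t;n)>0 \text{ for all } t\ge 0 \text{ and } V(t;n)>-1 \text{ for some } t>0\}$. Then $\mathbb{R}$ is the disjoint union $\mathbb{R}=\beta^-\cup\beta^0\cup\beta^+$.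
   Context: The function $R$ is differentiable on $\mathbb{R}$. *)

(* Defs.v *)
From Stdlib Require Import Reals.
From Coquelicot Require Import Coquelicot.
Open Scope R_scope.

Definition Rfun (Q : R -> R) (V : R) : R :=
  if Rlt_dec V (-1) then -2 * (1 - exp (Q V)) ^ 2 else 4 * (V + 1).

Definition is_Q (Q : R -> R) : Prop :=
  forall V, V < -1 -> Q V < 0 /\ Q V - exp (Q V) = V.

(* (V, W) solves V'' + 3V' = R(V) on (0,T), V(0) = m, V'(0) = n, with W = V'.
   V and W are continuous from the right at 0 (so V'(0)=n as a one-sided derivative). *)
Definition is_sol (Q : R -> R) (m n : R) (T : Rbar) (V W : R -> R) : Prop :=
  Rbar_lt (Finite 0) T /\
  V 0 = m /\ W 0 = n /\
  filterlim V (at_right 0) (locally m) /\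
  filterlim W (at_right 0) (locally n) /\
  (forall t, 0 < t -> Rbar_lt (Finite t) T ->
     is_derive V t (W t) /\ is_derive W t (Rfun Q (V t) - 3 * W t)).

Definition is_max_sol (Q : R -> R) (m n : R) (T : Rbar) (V W : R -> R) : Prop :=
  is_sol Q m n T V W /\
  (forall T2 V2 W2, is_sol Q m n T2 V2 W2 -> Rbar_le T2 T).

Definition beta_minus (T : R -> Rbar) (V W : R -> R -> R) (n : R) : Prop :=
  exists t, 0 < t /\ Rbar_lt (Finite t) (T n) /\ W n t < 0.

Definition beta_zero (T : R -> Rbar) (V W : R -> R -> R) (n : R) : Prop :=
  forall t, 0 < t -> Rbar_lt (Finite t) (T n) -> W n t > 0 /\ V n t <= -1.

Definition beta_plus (T : R -> Rbar) (V W : R -> R -> R) (n : R) : Prop :=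
  (forall t, 0 <= t -> Rbar_lt (Finite t) (T n) -> W n t > 0) /\
  (exists t, 0 < t /\ Rbar_lt (Finite t) (T n) /\ V n t > -1).

(* Main.v *)
Require Import Defs.
From Stdlib Require Import Reals.
From Coquelicot Require Import Coquelicot.
From Stdlib Require Import Lra Psatz Classical.
Open Scope R_scope.

Lemma lim_right (f:R->R) l : filterlim f (at_right 0) (locally l) -> forall eps, 0<eps -> exists d, 0<d /\ forall t, 0<t<d -> Rabs (f t - l) < eps.
Proof. intros H eps Heps.
 pose proof (proj1 (filterlim_locally (F:=at_right 0) (T:=R) (U:=R_UniformSpace) f l) H) as H'.
 destruct (H' (mkposreal eps Heps)) as [d Hd]. exists d; split. apply cond_pos. intros t [H1 H2]. apply (Hd t).
 unfold ball; simpl; unfold AbsRing_ball, abs, minus, plus, opp; simpl. rewrite Ropp_0, Rplus_0_r, Rabs_right; lra. auto.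
Qed.

Lemma Rbar_small (T : Rbar) d : Rbar_lt (Finite 0) T -> 0 < d ->
  exists e, 0 < e <= d /\ forall t, t <= e -> Rbar_lt (Finite t) T.
Proof.
  intros HT Hd. destruct T as [r| |]; simpl in HT.
  - exists (Rmin d (r/2)). split. split. apply Rmin_glb_lt; lra. apply Rmin_l.
    intros t Ht. simpl. pose proof (Rmin_r d (r/2)). lra.
  - exists d. split. lra. intros; simpl; auto.
  - contradiction.
Qed.

Lemma Rbar_right (T : Rbar) t0 : Rbar_lt (Finite t0) T ->
  exists b, t0 < b /\ forall x, x < b -> Rbar_lt (Finite x) T.
Proof.
  intros HT. destruct T as [r| |]; simpl in HT.
  - exists r. split. lra. intros x Hx; simpl; lra.
  - exists (t0+1). split. lra. intros; simpl; auto.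
  - contradiction.
Qed.

Lemma Rbar_lt_le_trans' t t0 (T : Rbar) : t <= t0 -> Rbar_lt (Finite t0) T -> Rbar_lt (Finite t) T.
Proof. intros H1 H2. destruct T; simpl in *; auto; lra. Qed.

Lemma exp_lt1 q : q < 0 -> exp q < 1.
Proof. intros; rewrite <- exp_0; apply exp_increasing; lra. Qed.

Lemma Rfun_neg Q v : is_Q Q -> v < -1 -> Rfun Q v < 0.
Proof.
  intros hQ Hv. unfold Rfun. destruct (Rlt_dec v (-1)); [|lra].
  destruct (hQ v Hv) as [H1 _]. pose proof (exp_lt1 _ H1). nra.
Qed.

Lemma Rfun_pos Q v : v > -1 -> Rfun Q v > 0.
Proof. intros Hv. unfold Rfun. destruct (Rlt_dec v (-1)); lra. Qed.

Lemma Rfun_ub Q c v : is_Q Q -> c < -1 -> v <= c -> Rfun Q v <= -2*(1-exp(c+1))^2.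
Proof.
  intros hQ Hc Hv. unfold Rfun. destruct (Rlt_dec v (-1)); [|lra].
  destruct (hQ v r) as [H1 H2]. pose proof (exp_lt1 _ H1).
  assert (Q v < c+1) by lra.
  assert (exp (Q v) < exp (c+1)) by (apply exp_increasing; lra).
  assert (exp (c+1) < 1) by (apply exp_lt1; lra).
  nra.
Qed.

Lemma key_ineq q : q <= 0 -> (1-exp q)^2 <= 2*(exp q - 1 - q).
Proof.
  intros Hq.
  set (f := fun x => 4*exp x - exp x * exp x - 3 - 2*x).
  assert (Hd : forall x, is_derive f x (4*exp x - 2*exp x*exp x - 2)).
  { intros x. unfold f. auto_derive; auto. ring. }
  destruct (MVT_gen f q 0 (fun x => 4*exp x - 2*exp x*exp x - 2)) as [c [_ Hc]].
  { intros; apply Hd. }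
  { intros x _. apply derivable_continuous_pt. exists (4*exp x - 2*exp x*exp x - 2).
    apply is_derive_Reals, Hd. }
  unfold f in Hc. rewrite exp_0 in Hc.
  assert (4*exp c - 2*exp c*exp c - 2 <= 0) by (pose proof (pow2_ge_0 (exp c - 1)); nra).
  nra.
Qed.

Lemma Rfun_bound Q v : is_Q Q -> (Rfun Q v)^2 <= 16*(v+1)^2.
Proof.
  intros hQ. unfold Rfun. destruct (Rlt_dec v (-1)).
  - destruct (hQ v r) as [H1 H2]. pose proof (key_ineq (Q v) ltac:(lra)).
    pose proof (exp_lt1 _ H1). pose proof (exp_pos (Q v)).
    set (a := 1 - exp (Q v)) in *. set (g := exp (Q v) - 1 - Q v) in *.
    assert (Hg : v + 1 = - g) by (unfold g; lra).
    rewrite Hg.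
    assert (0 <= a^2) by apply pow2_ge_0.
    assert (a^2*a^2 <= (2*g)*(2*g)) by (apply Rmult_le_compat; lra).
    nra.
  - nra.
Qed.

Lemma local_min_deriv f a b c l : is_derive f c l -> a < c -> c < b ->
  (forall x, a < x -> x < b -> f c <= f x) -> l = 0.
Proof.
  intros Hd H1 H2 H3. apply is_derive_Reals in Hd.
  pose proof (deriv_minimum f a b c (exist _ l Hd) H1 H2 H3). simpl in H. exact H.
Qed.

Section Main.
Variables (Q : R -> R) (hQ : is_Q Q) (m n : R) (hm : m < -1) (T : Rbar) (V W : R -> R).
Hypothesis (hsol : is_sol Q m n T V W).

Lemma no_zero t0 : 0 < t0 -> Rbar_lt (Finite t0) T -> V t0 = -1 -> W t0 = 0 -> False.
Proof.
  intros Ht0 HT0 HV HW.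
  destruct hsol as [HT [HV0 [HW0 [HVlim [HWlim Hd]]]]].
  set (h := fun t => ((V t + 1)^2 + (W t)^2) * exp (17*t)).
  set (dh := fun x => (2*(V x+1)*W x + 2*W x*(Rfun Q (V x) - 3*W x))*exp (17*x)
           + ((V x+1)^2 + (W x)^2)*(17*exp (17*x))).
  assert (Hh : forall x, 0 < x -> Rbar_lt (Finite x) T -> is_derive h x (dh x)).
  { intros x Hx HxT. destruct (Hd x Hx HxT) as [D1 D2]. unfold h, dh.
    auto_derive. repeat split; eexists; eauto.
    assert (E1 : Derive (fun y => V y) x = W x) by (apply is_derive_unique; exact D1).
    assert (E2 : Derive (fun y => W y) x = Rfun Q (V x) - 3 * W x) by (apply is_derive_unique; exact D2).
    rewrite E1, E2. ring. }
  assert (Hdh : forall x, 0 <= dh x).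
  { intros x. unfold dh. pose proof (Rfun_bound Q (V x) hQ). pose proof (exp_pos (17*x)).
    set (u := V x + 1) in *. set (w := W x) in *. set (r := Rfun Q (V x)) in *.
    assert (0 <= (u+w)^2 + (w+r)^2 + 16*u^2 - r^2 + 9*w^2).
    { pose proof (pow2_ge_0 (u+w)). pose proof (pow2_ge_0 (w+r)). pose proof (pow2_ge_0 w). lra. }
    replace ((2 * u * w + 2 * w * (r - 3 * w)) * exp (17 * x) + (u ^ 2 + w ^ 2) * (17 * exp (17 * x)))
      with (((u+w)^2 + (w+r)^2 + 16*u^2 - r^2 + 9*w^2) * exp (17*x)) by ring.
    apply Rmult_le_pos; lra. }
  assert (Hzero : forall t, 0 < t < t0 -> V t = -1).
  { intros t Ht.
    destruct (MVT_gen h t t0 dh) as [c [Hc Hc2]].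
    { intros x Hx. rewrite Rmin_left in Hx by lra. rewrite Rmax_right in Hx by lra.
      apply Hh. lra. apply Rbar_lt_le_trans' with t0; auto; lra. }
    { intros x Hx. rewrite Rmin_left in Hx by lra. rewrite Rmax_right in Hx by lra.
      apply derivable_continuous_pt. exists (dh x). apply is_derive_Reals, Hh. lra.
      apply Rbar_lt_le_trans' with t0; auto; lra. }
    pose proof (Hdh c).
    assert (h t0 = 0) by (unfold h; rewrite HV, HW; ring).
    assert (h t <= 0) by nra.
    unfold h in H1. pose proof (exp_pos (17*t)).
    assert ((V t + 1)^2 + (W t)^2 <= 0).
    { destruct (Rle_dec ((V t + 1)^2 + (W t)^2) 0); auto. nra. }
    nra. }
  destruct (lim_right V m HVlim (-1-m) ltac:(lra)) as [d [Hd0 Hdd]].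
  set (t := Rmin d t0 / 2).
  assert (0 < Rmin d t0) by (apply Rmin_glb_lt; lra).
  pose proof (Rmin_l d t0). pose proof (Rmin_r d t0).
  specialize (Hdd t ltac:(unfold t; lra)).
  rewrite (Hzero t) in Hdd by (unfold t; lra).
  rewrite Rabs_right in Hdd; lra.
Qed.

End Main.

Theorem lemma4p1 (Q : R -> R) (hQ : is_Q Q) (m : R) (hm : m < -1)
  (T : R -> Rbar) (V W : R -> R -> R)
  (hsol : forall n, is_max_sol Q m n (T n) (V n) (W n)) :
  forall n,
    (beta_minus T V W n \/ beta_zero T V W n \/ beta_plus T V W n) /\
    ~ (beta_minus T V W n /\ beta_zero T V W n) /\
    ~ (beta_minus T V W n /\ beta_plus T V W n) /\
    ~ (beta_zero T V W n /\ beta_plus T V W n).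
Proof.
  intros n.
  assert (Hs : is_sol Q m n (T n) (V n) (W n)) by apply (proj1 (hsol n)).
  pose proof Hs as Hs'.
  destruct Hs' as [HT [HV0 [HW0 [HVlim [HWlim Hd]]]]].
  unfold beta_minus, beta_zero, beta_plus.
  split; [| split; [| split]].
  2: { intros [[t [H1 [H2 H3]]] H4]. destruct (H4 t H1 H2). lra. }
  2: { intros [[t [H1 [H2 H3]]] [H4 _]]. specialize (H4 t ltac:(lra) H2). lra. }
  2: { intros [H4 [_ [t [H1 [H2 H3]]]]]. destruct (H4 t H1 H2). lra. }
  destruct (classic (exists t, 0 < t /\ Rbar_lt (Finite t) (T n) /\ W n t < 0)) as [Hm|Hnm].
  { left; exact Hm. }
  right.
  assert (Hge : forall t, 0 < t -> Rbar_lt (Finite t) (T n) -> 0 <= W n t).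
  { intros t H1 H2. destruct (Rle_dec 0 (W n t)); auto. exfalso; apply Hnm.
    exists t; repeat split; auto; lra. }
  destruct (total_order_T n 0) as [[Hn|Hn]|Hn].
  -
    exfalso. apply Hnm.
    destruct (lim_right (W n) n HWlim (-n) ltac:(lra)) as [d [Hd0 Hdd]].
    destruct (Rbar_small (T n) d HT Hd0) as [e [He He2]].
    exists (e/2). split. lra. split. apply He2; lra.
    specialize (Hdd (e/2) ltac:(lra)). apply Rabs_def2 in Hdd. lra.
  -
    exfalso. apply Hnm. subst n.
    set (c := (m-1)/2). assert (Hc : c < -1) by (unfold c; lra).
    set (k := 2*(1-exp(c+1))^2).
    assert (Hk : 0 < k).
    { unfold k. pose proof (exp_lt1 (c+1) ltac:(lra)). nra. }
    destruct (lim_right (V 0) m HVlim (c-m) ltac:(unfold c; lra)) as [d1 [Hd1 Hdd1]].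
    destruct (lim_right (W 0) 0 HWlim (k/6) ltac:(lra)) as [d2 [Hd2 Hdd2]].
    assert (Hd12 : 0 < Rmin d1 d2) by (apply Rmin_glb_lt; lra).
    pose proof (Rmin_l d1 d2). pose proof (Rmin_r d1 d2).
    destruct (Rbar_small (T 0) (Rmin d1 d2 / 2) HT ltac:(lra)) as [e [He He2]].
    set (t := e).
    destruct (lim_right (W 0) 0 HWlim (k*t/4) ltac:(unfold t; nra)) as [d3 [Hd3 Hdd3]].
    set (s := Rmin d3 t / 2).
    assert (0 < Rmin d3 t) by (apply Rmin_glb_lt; unfold t; lra).
    pose proof (Rmin_l d3 t). pose proof (Rmin_r d3 t).
    assert (Hs0 : 0 < s /\ s <= t/2 /\ s < d3) by (unfold s; lra).
    exists t. split. unfold t; lra. split. apply He2; unfold t; lra.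
    destruct (MVT_gen (W 0) s t (fun x => Rfun Q (V 0 x) - 3 * W 0 x)) as [x [Hx Hx2]].
    { intros x Hx. rewrite Rmin_left in Hx by lra. rewrite Rmax_right in Hx by lra.
      apply (Hd x ltac:(lra)). apply He2; unfold t in *; lra. }
    { intros x Hx. rewrite Rmin_left in Hx by lra. rewrite Rmax_right in Hx by lra.
      apply derivable_continuous_pt. exists (Rfun Q (V 0 x) - 3 * W 0 x).
      apply is_derive_Reals, (Hd x ltac:(lra)). apply He2; unfold t in *; lra. }
    rewrite Rmin_left in Hx by lra. rewrite Rmax_right in Hx by lra.
    assert (HVx : V 0 x <= c).
    { specialize (Hdd1 x ltac:(unfold t in *; lra)). apply Rabs_def2 in Hdd1. lra. }
    pose proof (Rfun_ub Q c (V 0 x) hQ Hc HVx) as Hr. assert (Hr2 : Rfun Q (V 0 x) <= -k) by (unfold k; lra).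
    assert (HWx : -(k/6) < W 0 x).
    { specialize (Hdd2 x ltac:(unfold t in *; lra)). apply Rabs_def2 in Hdd2. lra. }
    assert (HWs : W 0 s < k*t/4).
    { specialize (Hdd3 s ltac:(lra)). apply Rabs_def2 in Hdd3. lra. }
    assert (Rfun Q (V 0 x) - 3 * W 0 x < - (k/2)) by lra.
    assert ((Rfun Q (V 0 x) - 3 * W 0 x) * (t - s) <= -(k/2) * (t-s)) by nra.
    nra.
  -
    assert (Hpos : forall t, 0 < t -> Rbar_lt (Finite t) (T n) -> W n t > 0).
    { intros t0 H1 H2. destruct (Rle_dec (W n t0) 0) as [Hle|Hlt]; [|lra].
      exfalso. assert (HW : W n t0 = 0) by (pose proof (Hge t0 H1 H2); lra).
      destruct (Rbar_right _ _ H2) as [b [Hb Hbb]].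
      destruct (Hd t0 H1 H2) as [_ D2].
      assert (Hl : Rfun Q (V n t0) - 3 * W n t0 = 0).
      { apply (local_min_deriv (W n) 0 b t0); auto.
        intros x Hx1 Hx2. rewrite HW. apply Hge; auto. }
      rewrite HW in Hl.
      assert (HV : V n t0 = -1).
      { destruct (total_order_T (V n t0) (-1)) as [[H|H]|H]; auto.
        - pose proof (Rfun_neg Q _ hQ H). lra.
        - pose proof (Rfun_pos Q _ H). lra. }
      exact (no_zero Q hQ m n hm (T n) (V n) (W n) Hs t0 H1 H2 HV HW). }
    destruct (classic (exists t, 0 < t /\ Rbar_lt (Finite t) (T n) /\ V n t > -1)) as [Hp|Hnp].
    + right. split; auto. intros t Ht HtT. destruct (Rle_lt_or_eq_dec 0 t Ht) as [Ht'|Ht'].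
      * apply Hpos; auto.
      * subst t. rewrite HW0. lra.
    + left. intros t H1 H2. split. apply Hpos; auto.
      destruct (Rle_dec (V n t) (-1)); auto. exfalso; apply Hnp. exists t; repeat split; auto; lra.
Qed.
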